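(* Consider the linear system $x_{t+1}=Ax_t+Bu_t$ in closed loop with the LMPC policy defined for a prediction horizon $N$. Suppose the stage cost is $h(x,u)=x^\top Qx+u^\top Ru$ with $Q\succeq 0$, $R\succ 0$, that a feasible initial trajectory is given as described below, and that the LICQ condition described below holds. Assume that after $c$ iterations the closed-loop system converges to a fixed-point $(\boldsymbol{x}^\infty,\boldsymbol{u}^\infty)$, i.e. $\boldsymbol{x}^c=\boldsymbol{x}^{c+1}=\dots=\boldsymbol{x}^\infty$ and $\boldsymbol{u}^c=\boldsymbol{u}^{c+1}=\dots=\boldsymbol{u}^\infty$. Then, for all $t\geq 0$ and all $T>0$, the pair $(\boldsymbol{x}^\infty_{t:t+T},\boldsymbol{u}^\infty_{t:t+T-1})=([x_t^\infty,\ldots,x_{t+T}^\infty],[u_t^\infty,\ldots,u_{t+T-1}^\infty])$ is the optimizer of the finite-horizon optimal control problem $$P^*_{t\to t+T}(x_t^\infty,x_{t+T}^\infty)=\min_{u_0,\ldots,u_{T-1}}\sum_{k=0}^{T-1}h(x_k,u_k)$$ subject to $x_{k+1}=Ax_k+Bu_k$, $x_k\in\mathcal{X}$, $u_k\in\mathcal{U}$ for $k=0,\ldots,T-1$, $x_0=x_t^\infty$, $x_T=x_{t+T}^\infty$.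
   Context: System: $x_{t+1}=Ax_t+Bu_t$, $x_t\in\mathbb{R}^n$, $u_t\in\mathbb{R}^d$, with constraints $x_t\in\mathcal{X}=\{x:F_xx\le b_x\}$, $u_t\in\mathcal{U}=\{u:F_uu\le b_u\}$, polyhedra containing the origin in their interior. Stage cost $h(x,u)=x^\top Qx+u^\top Ru$, $Q\succeq0$, $R\succ0$. The task (regulation from a fixed initial state $x_S$) is repeated over iterations $j$; $\boldsymbol{x}^j=[x_0^j,x_1^j,\ldots]$, $\boldsymbol{u}^j=[u_0^j,u_1^j,\ldots]$ are the closed-loop trajectories at iteration $j$, with $x_0^j=x_S$. Convex safe set: $\mathcal{CS}^j=\mathrm{Conv}(\bigcup_{i=0}^j\bigcup_{t\ge0}x_t^i)$. Cost-to-go $J^i_{t\to\infty}(x_t^i)=\sum_{k=t}^\infty h(x_k^i,u_k^i)$. $V$-function: $V^j(x)=\min_{\gamma_k^i\ge0}\sum_{i=0}^j\sum_{k=0}^\infty\gamma_k^iJ^i_{k\to\infty}(x_k^i)$ subject to $\sum_{i,k}\gamma_k^ix_k^i=x$, $\sum_{i,k}\gamma_k^i=1$. Initial trajectory assumption: at iteration $0$ a trajectory $\boldsymbol{x}^0,\boldsymbol{u}^0$ from $x_S$ is given with $x_t^0\in\mathcal{X}$, $u_t^0\in\mathcal{U}$ for all $t$, $x_t^0\to0$, $u_t^0\to0$, and $\sum_t h(x_t^0,u_t^0)<\infty$. LMPC policy at time $t$ of iteration $j$: solve $\min_{u_{t|t},\ldots,u_{t+N-1|t}}\sum_{k=t}^{t+N-1}h(x_{k|t},u_{k|t})+V^{j-1}(x_{t+N|t})$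 subject to $x_{k+1|t}=Ax_{k|t}+Bu_{k|t}$, $x_{k|t}\in\mathcal{X}$, $u_{k|t}\in\mathcal{U}$, $x_{t+N|t}\in\mathcal{CS}^{j-1}$, $x_{t|t}=x_t^j$, and apply the first optimal input $u^{j,*}_{t|t}$ (receding horizon). LICQ assumption: for the given horizon $N$ and for all $t\ge1$, at the optimal solution of the finite-horizon problem $P^*_{t\to t+T}(x_t^\infty,x_{t+T}^\infty)$ with $T=N-1$ (written in terms of the stacked vector $\boldsymbol{z}=\mathrm{Vec}(x_0,u_0,\ldots,x_{T-1},u_{T-1})$ with equality constraints encoding the dynamics, initial and terminal state, and inequality constraints encoding $\mathcal{X},\mathcal{U}$), the gradients of the equality constraints and of the active inequality constraints are linearly independent (the stacked matrix of these gradients has full row rank). *)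

(* Defs.v *)
From HB Require Import structures.
From mathcomp Require Import all_boot all_order all_algebra.
From mathcomp Require Import all_classical all_reals all_analysis.
Set Implicit Arguments. Unset Strict Implicit. Unset Printing Implicit Defensive.
Import Order.TTheory GRing.Theory Num.Theory.
Local Open Scope ring_scope.

Definition inPoly (R : realType) (p m : nat) (F : 'M[R]_(p, m)) (b : 'cV[R]_p)
  (x : 'cV[R]_m) : Prop := forall i, (F *m x) i 0 <= b i 0.

Definition origin_interior (R : realType) (p m : nat) (F : 'M[R]_(p, m))
  (b : 'cV[R]_p) : Prop :=
  exists2 e : R, 0 < e & forall x : 'cV[R]_m,
    (forall i, `|x i 0| < e) -> inPoly F b x.

Definition psd (R : realType) (m : nat) (M : 'M[R]_m) : Prop :=
  M^T = M /\ forall v : 'cV[R]_m, 0 <= (v^T *m M *m v) 0 0.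
Definition pd (R : realType) (m : nat) (M : 'M[R]_m) : Prop :=
  M^T = M /\ forall v : 'cV[R]_m, v != 0 -> 0 < (v^T *m M *m v) 0 0.

Section LMPC.
Variable R : realType.
Variables (n d px pu : nat).
Variables (A : 'M[R]_n) (B : 'M[R]_(n, d)).
Variables (Fx : 'M[R]_(px, n)) (bx : 'cV[R]_px) (Fu : 'M[R]_(pu, d)) (bu : 'cV[R]_pu).
Variables (Q : 'M[R]_n) (Rc : 'M[R]_d).

Definition stage_cost (x : 'cV[R]_n) (u : 'cV[R]_d) : R :=
  (x^T *m Q *m x) 0 0 + (u^T *m Rc *m u) 0 0.

Definition costtogo (X : nat -> nat -> 'cV[R]_n) (U : nat -> nat -> 'cV[R]_d)
  (i k : nat) : \bar R :=
  (\sum_(k <= m <oo) (stage_cost (X i m) (U i m))%:E)%E.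

(* gamma (finitely supported on k < M) gives a convex combination of the
   stored states x^i_k, i = 0..j, equal to x. *)
Definition conv_weights (X : nat -> nat -> 'cV[R]_n) (j : nat) (x : 'cV[R]_n)
  (M : nat) (gam : nat -> nat -> R) : Prop :=
  [/\ forall i k, 0 <= gam i k,
      \sum_(i < j.+1) \sum_(k < M) gam i k = 1 &
      \sum_(i < j.+1) \sum_(k < M) gam i k *: X i k = x].

Definition inCS (X : nat -> nat -> 'cV[R]_n) (j : nat) (x : 'cV[R]_n) : Prop :=
  exists M gam, conv_weights X j x M gam.

(* V-function V^j(x) (infimum; +oo outside CS^j). *)
Definition Vfun (X : nat -> nat -> 'cV[R]_n) (U : nat -> nat -> 'cV[R]_d)
  (j : nat) (x : 'cV[R]_n) : \bar R :=
  ereal_inf [set v : \bar R | exists M gam, conv_weights X j x M gam /\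
     v = (\sum_(i < j.+1) \sum_(k < M) (gam i k)%:E * costtogo X U i k)%E].

(* LMPC problem with horizon N at state x, using data of iterations 0..jp
   (jp = j-1). Predicted states xp k = x_{t+k|t}, inputs up k = u_{t+k|t}. *)
Definition lmpc_feasible (N : nat) (X : nat -> nat -> 'cV[R]_n) (jp : nat)
  (x : 'cV[R]_n) (xp : nat -> 'cV[R]_n) (up : nat -> 'cV[R]_d) : Prop :=
  [/\ xp 0%N = x,
      forall k, (k < N)%N ->
        [/\ xp k.+1 = A *m xp k + B *m up k, inPoly Fx bx (xp k) & inPoly Fu bu (up k)]
    & inCS X jp (xp N)].

Definition lmpc_cost (N : nat) (X : nat -> nat -> 'cV[R]_n)
  (U : nat -> nat -> 'cV[R]_d) (jp : nat)
  (xp : nat -> 'cV[R]_n) (up : nat -> 'cV[R]_d) : \bar R :=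
  ((\sum_(k < N) stage_cost (xp k) (up k))%:E + Vfun X U jp (xp N))%E.

Definition lmpc_optimal (N : nat) (X : nat -> nat -> 'cV[R]_n)
  (U : nat -> nat -> 'cV[R]_d) (jp : nat) (x : 'cV[R]_n)
  (xp : nat -> 'cV[R]_n) (up : nat -> 'cV[R]_d) : Prop :=
  lmpc_feasible N X jp x xp up /\
  forall xp' up', lmpc_feasible N X jp x xp' up' ->
    (lmpc_cost N X U jp xp up <= lmpc_cost N X U jp xp' up')%E.

Definition fh_feasible (T : nat) (x0 xT : 'cV[R]_n)
  (x : nat -> 'cV[R]_n) (u : nat -> 'cV[R]_d) : Prop :=
  [/\ x 0%N = x0,
      forall k, (k < T)%N ->
        [/\ x k.+1 = A *m x k + B *m u k, inPoly Fx bx (x k) & inPoly Fu bu (u k)]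
    & x T = xT].

Definition fh_cost (T : nat) (x : nat -> 'cV[R]_n) (u : nat -> 'cV[R]_d) : R :=
  \sum_(k < T) stage_cost (x k) (u k).

Definition fh_optimal (T : nat) (x0 xT : 'cV[R]_n)
  (x : nat -> 'cV[R]_n) (u : nat -> 'cV[R]_d) : Prop :=
  fh_feasible T x0 xT x u /\
  forall x' u', fh_feasible T x0 xT x' u' -> fh_cost T x u <= fh_cost T x' u'.

Definition fh_optimizer (T : nat) (x0 xT : 'cV[R]_n)
  (x : nat -> 'cV[R]_n) (u : nat -> 'cV[R]_d) : Prop :=
  fh_optimal T x0 xT x u /\
  forall x' u', fh_optimal T x0 xT x' u' ->
    (forall k, (k <= T)%N -> x' k = x k) /\ (forall k, (k < T)%N -> u' k = u k).

(* LICQ for P*_{t -> t+T} written in z = Vec(x_0,u_0,...,x_{T-1},u_{T-1}).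
   Coordinates of z: (k, inl l) = (x_k)_l, (k, inr l) = (u_k)_l.
   Constraint rows: equality rows (k, i), k = 0..T  (k = 0: x_0 = x0;
   1 <= k <= T-1: x_k - A x_{k-1} - B u_{k-1} = 0; k = T: A x_{T-1} + B u_{T-1} = xT,
   with gradient taken of its negative), state inequality rows (k, p),
   input inequality rows (k, p), k = 0..T-1. *)
Definition zcol (T : nat) := ('I_T * ('I_n + 'I_d))%type.
Definition crow (T : nat) :=
  (('I_T.+1 * 'I_n) + (('I_T * 'I_px) + ('I_T * 'I_pu)))%type.

Definition grad (T : nat) (r : crow T) (c : zcol T) : R :=
  let: (m, cl) := c in
  match r, cl with
  | inl (k, i), inl l =>
      ((nat_of_ord m == nat_of_ord k) && (l == i))%:R
      - (m.+1 == nat_of_ord k)%:R * A i l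
  | inl (k, i), inr l => - ((m.+1 == nat_of_ord k)%:R * B i l)
  | inr (inl (k, p)), inl l => (m == k)%:R * Fx p l
  | inr (inl _), inr _ => 0
  | inr (inr _), inl _ => 0
  | inr (inr (k, p)), inr l => (m == k)%:R * Fu p l
  end.

Definition active (T : nat) (x : nat -> 'cV[R]_n) (u : nat -> 'cV[R]_d)
  (r : crow T) : bool :=
  match r with
  | inl _ => true
  | inr (inl (k, p)) => (Fx *m x k) p 0 == bx p 0
  | inr (inr (k, p)) => (Fu *m u k) p 0 == bu p 0
  end.

Definition licq (T : nat) (x : nat -> 'cV[R]_n) (u : nat -> 'cV[R]_d) : Prop :=
  forall lam : crow T -> R,
    (forall r, ~~ active x u r -> lam r = 0) ->
    (forall c, \sum_(r : crow T) lam r * grad r c = 0) ->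
    forall r, lam r = 0.

End LMPC.

(* Main.v *)
Require Import Defs.
From HB Require Import structures.
From mathcomp Require Import all_boot all_order all_algebra.
From mathcomp Require Import all_classical all_reals all_analysis.
From mathcomp Require Import ring lra.
Import Order.TTheory GRing.Theory Num.Theory numFieldNormedType.Exports.
Local Open Scope classical_set_scope.
Local Open Scope ring_scope.

Section BF.
Context {R : realType}.

Definition bf {m : nat} (M : 'M[R]_m) (v w : 'cV[R]_m) : R := (v^T *m M *m w) 0 0.

Lemma bfDl {m} (M : 'M[R]_m) v1 v2 w : bf M (v1 + v2) w = bf M v1 w + bf M v2 w.
Proof. by rewrite /bf raddfD /= !mulmxDl mxE. Qed.
Lemma bfZl {m} (M : 'M[R]_m) a v w : bf M (a *: v) w = a * bf M v w.
Proof. by rewrite /bf linearZ /= -!scalemxAl mxE. Qed.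
Lemma bfDr {m} (M : 'M[R]_m) v w1 w2 : bf M v (w1 + w2) = bf M v w1 + bf M v w2.
Proof. by rewrite /bf mulmxDr mxE. Qed.
Lemma bfZr {m} (M : 'M[R]_m) a v w : bf M v (a *: w) = a * bf M v w.
Proof. by rewrite /bf -scalemxAr mxE. Qed.
Lemma bfNl {m} (M : 'M[R]_m) v w : bf M (- v) w = - bf M v w.
Proof. by rewrite -scaleN1r bfZl mulN1r. Qed.
Lemma bfNr {m} (M : 'M[R]_m) v w : bf M v (- w) = - bf M v w.
Proof. by rewrite -scaleN1r bfZr mulN1r. Qed.
Lemma bf0l {m} (M : 'M[R]_m) w : bf M 0 w = 0.
Proof. by rewrite -(scale0r (0 : 'cV[R]_m)) bfZl mul0r. Qed.
Lemma bf0r {m} (M : 'M[R]_m) w : bf M w 0 = 0.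
Proof. by rewrite -(scale0r (0 : 'cV[R]_m)) bfZr mul0r. Qed.
Lemma bfBl {m} (M : 'M[R]_m) v1 v2 w : bf M (v1 - v2) w = bf M v1 w - bf M v2 w.
Proof. by rewrite bfDl bfNl. Qed.
Lemma bfBr {m} (M : 'M[R]_m) v w1 w2 : bf M v (w1 - w2) = bf M v w1 - bf M v w2.
Proof. by rewrite bfDr bfNr. Qed.

Lemma bf_suml {m} (M : 'M[R]_m) (I : Type) (s : seq I) (P : pred I) (F : I -> 'cV[R]_m) w :
  bf M (\sum_(i <- s | P i) F i) w = \sum_(i <- s | P i) bf M (F i) w.
Proof.
apply: (big_ind2 (fun a b => bf M a w = b)); first exact: bf0l.
  by move=> a1 b1 a2 b2 <- <-; rewrite bfDl.
by [].
Qed.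

Lemma bf_sym {m} (M : 'M[R]_m) v w : M^T = M -> bf M v w = bf M w v.
Proof.
move=> HM; rewrite /bf.
transitivity ((v^T *m M *m w)^T 0 0); first by rewrite [RHS]mxE.
by rewrite !trmx_mul trmxK HM mulmxA.
Qed.

Lemma bf_sq {m} (M : 'M[R]_m) v w a : M^T = M ->
  bf M (v + a *: w) (v + a *: w) = bf M v v + 2 * a * bf M v w + a ^+ 2 * bf M w w.
Proof.
move=> HM; rewrite !bfDl !bfDr !bfZl !bfZr (bf_sym M w v HM).
by rewrite expr2; ring.
Qed.

Lemma bf_jensen {m} (M : 'M[R]_m) (I : finType) (w : I -> R) (v : I -> 'cV[R]_m) :
  M^T = M -> (forall y, 0 <= bf M y y) ->
  (forall i, 0 <= w i) -> \sum_i w i = 1 ->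
  bf M (\sum_i w i *: v i) (\sum_i w i *: v i) <= \sum_i w i * bf M (v i) (v i).
Proof.
move=> HM Hp w0 w1; set mm := \sum_i w i *: v i.
have H0 : 0 <= \sum_i w i * bf M (v i - mm) (v i - mm).
  by apply: sumr_ge0 => i _; apply: mulr_ge0.
have E1 : \sum_i w i * bf M (v i) mm = bf M mm mm.
  by rewrite /mm bf_suml; apply: eq_bigr => i _; rewrite bfZl.
have E2 : \sum_i w i * bf M (v i - mm) (v i - mm) =
   \sum_i w i * bf M (v i) (v i) - 2 * \sum_i w i * bf M (v i) mm
   + (\sum_i w i) * bf M mm mm.
  rewrite mulr_sumr mulr_suml -sumrB -big_split /=; apply: eq_bigr => i _.
  rewrite !bfBl !bfBr (bf_sym M mm (v i) HM); ring.
move: H0; rewrite E2 E1 w1; lra.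
Qed.

End BF.

Section Gen.
Context {R : realType}.

Lemma bf_jensen2 {m} (M : 'M[R]_m) (a b : nat) (g : nat -> nat -> R)
    (v : nat -> nat -> 'cV[R]_m) :
  M^T = M -> (forall y, 0 <= bf M y y) -> (forall i k, 0 <= g i k) ->
  \sum_(i < a) \sum_(k < b) g i k = 1 ->
  bf M (\sum_(i < a) \sum_(k < b) g i k *: v i k)
       (\sum_(i < a) \sum_(k < b) g i k *: v i k)
  <= \sum_(i < a) \sum_(k < b) g i k * bf M (v i k) (v i k).
Proof.
move=> HM Hp g0 g1; rewrite !pair_big /=; rewrite pair_big /= in g1.
by apply: bf_jensen.
Qed.

Lemma inPoly_conv2 {p m} (F : 'M[R]_(p, m)) bb (a b : nat) (g : nat -> nat -> R)
    (v : nat -> nat -> 'cV[R]_m) :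
  (forall i k, inPoly F bb (v i k)) -> (forall i k, 0 <= g i k) ->
  \sum_(i < a) \sum_(k < b) g i k = 1 ->
  inPoly F bb (\sum_(i < a) \sum_(k < b) g i k *: v i k).
Proof.
move=> Hv g0 g1 q.
have -> : (F *m (\sum_(i < a) \sum_(k < b) g i k *: v i k)) q 0
   = \sum_(i < a) \sum_(k < b) g i k * (F *m v i k) q 0.
  rewrite mulmx_sumr summxE; apply: eq_bigr => i _.
  rewrite mulmx_sumr summxE; apply: eq_bigr => k _.
  by rewrite -scalemxAr mxE.
apply: (@le_trans _ _ (\sum_(i < a) \sum_(k < b) g i k * bb q 0)).
  apply: ler_sum => i _; apply: ler_sum => k _.
  by apply: ler_wpM2l => //; apply: Hv.
under eq_bigr do rewrite -mulr_suml.
by rewrite -mulr_suml g1 mul1r.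
Qed.

Lemma mulmx_dsum {m n'} (M : 'M[R]_(m, n')) (a b : nat) (g : nat -> nat -> R)
   (v : nat -> nat -> 'cV[R]_n') :
  M *m (\sum_(i < a) \sum_(k < b) g i k *: v i k)
  = \sum_(i < a) \sum_(k < b) g i k *: (M *m v i k).
Proof.
rewrite mulmx_sumr; apply: eq_bigr => i _; rewrite mulmx_sumr.
by apply: eq_bigr => k _; rewrite scalemxAr.
Qed.

End Gen.

Set Implicit Arguments. Unset Strict Implicit.

Lemma sum_enum (R : realType) (T : finType) (F : T -> R) :
  \sum_(r : T) F r = \sum_(i < #|T|) F (enum_val i).
Proof.
transitivity (\sum_(r in T) F r); first by apply: eq_bigl => r; rewrite inE.
exact: big_enum_val.
Qed.

Lemma lin_solve (R : realType) (Rw Cl : finType) (g : Rw -> Cl -> R) (act : Rw -> bool) :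
  (forall lam : Rw -> R, (forall r, ~~ act r -> lam r = 0) ->
     (forall c, \sum_r lam r * g r c = 0) -> forall r, lam r = 0) ->
  forall rhs : Rw -> R, exists z : Cl -> R,
    forall r, act r -> \sum_c g r c * z c = rhs r.
Proof.
move=> HL rhs.
pose H : 'M[R]_(#|Rw|, #|Cl|) :=
  \matrix_(i, j) ((act (enum_val i))%:R * g (enum_val i) (enum_val j)).
pose b : 'rV[R]_#|Rw| := \row_i ((act (enum_val i))%:R * rhs (enum_val i)).
have Hb : (b <= H^T)%MS.
  rewrite submxE; set K := cokermx H^T.
  have HK := mulmx_coker H^T; rewrite -/K in HK.
  have L0 : forall j r, (act r)%:R * K (enum_rank r) j = 0.
    move=> j; apply: HL.
      by move=> r /negbTE ->; rewrite mul0r.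
    move=> c.
    transitivity ((H^T *m K) (enum_rank c) j); last by rewrite HK mxE.
    rewrite mxE sum_enum; apply: eq_bigr => i _; rewrite !mxE enum_valK enum_rankK.
    by rewrite mulrAC.
  apply/eqP/matrixP => i j; rewrite [LHS]mxE [RHS]mxE.
  rewrite big1 // => k _; rewrite [b i k]mxE.
  have := L0 j (enum_val k); rewrite enum_valK => E.
  by rewrite mulrAC E mul0r.
have [D HD] := submxP Hb.
exists (fun c => D 0 (enum_rank c)) => r Hr.
have := congr1 (fun M : 'rV[R]_#|Rw| => M 0 (enum_rank r)) HD; rewrite !mxE enum_rankK Hr mul1r => ->.
rewrite sum_enum; apply: eq_bigr => j _; rewrite !mxE enum_rankK Hr enum_valK.
by rewrite mul1r mulrC.
Qed.

Section Rows.
Context {R : realType} {n d px pu : nat}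
  (A : 'M[R]_n) (B : 'M[R]_(n, d))
  (Fx : 'M[R]_(px, n)) (bx : 'cV[R]_px) (Fu : 'M[R]_(pu, d)) (bu : 'cV[R]_pu).

Definition zx T (z : zcol n d T -> R) (k : nat) : 'cV[R]_n :=
  if insub k is Some m then \col_l z (m, inl l) else 0.
Definition zu T (z : zcol n d T -> R) (k : nat) : 'cV[R]_d :=
  if insub k is Some m then \col_l z (m, inr l) else 0.

Lemma zx_out T z k : (T <= k)%N -> zx (T:=T) z k = 0.
Proof. by move=> Tk; rewrite /zx insubF // ltnNge Tk. Qed.
Lemma zu_out T z k : (T <= k)%N -> zu (T:=T) z k = 0.
Proof. by move=> Tk; rewrite /zu insubF // ltnNge Tk. Qed.
Lemma zx_in T z (m : 'I_T) l : zx z m l 0 = z (m, inl l).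
Proof. by rewrite /zx valK mxE. Qed.
Lemma zu_in T z (m : 'I_T) l : zu z m l 0 = z (m, inr l).
Proof. by rewrite /zu valK mxE. Qed.

Lemma zsum T (F : zcol n d T -> R) : \sum_c F c =
  \sum_(m : 'I_T) (\sum_(l < n) F (m, inl l) + \sum_(l < d) F (m, inr l)).
Proof.
rewrite (eq_bigr (fun c => F (c.1, c.2))); last by case.
rewrite -(pair_bigA _ (fun a b => F (a, b))) /=.
by apply: eq_bigr => m _; rewrite big_sumType.
Qed.

Lemma sum_pick T (f : nat -> R) k : (forall j, (T <= j)%N -> f j = 0) ->
  \sum_(m < T) (m == k :> nat)%:R * f m = f k.
Proof.
move=> Hf; case: (ltnP k T) => kT.
  rewrite (bigD1 (Ordinal kT)) //= eqxx mul1r big1 ?addr0 // => m Hm.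
  suff -> : (m == k :> nat) = false by rewrite mul0r.
  apply/negbTE; apply: contra Hm => /eqP E; apply/eqP; exact: val_inj.
rewrite Hf // big1 // => m _.
suff -> : (m == k :> nat) = false by rewrite mul0r.
by apply/negbTE; rewrite neq_ltn (leq_trans (ltn_ord m) kT).
Qed.

Lemma sum_pickS T (f : nat -> R) k : (forall j, (T <= j)%N -> f j = 0) ->
  \sum_(m < T) (m.+1 == k :> nat)%:R * f m = if k == 0%N then 0 else f k.-1.
Proof.
case: k => [|k] Hf /=; first by rewrite big1 // => m _; rewrite mul0r.
by rewrite -(sum_pick k Hf); apply: eq_bigr => m _; rewrite eqSS.
Qed.

Lemma gsum_pick T (k : 'I_T) (f : 'I_T -> R) : \sum_m (m == k)%:R * f m = f k.
Proof.
by rewrite (bigD1 k) //= eqxx mul1r big1 ?addr0 // => m /negbTE ->; rewrite mul0r.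
Qed.

Lemma grow_x T z (k : 'I_T) (p : 'I_px) :
  \sum_c grad A B Fx Fu (inr (inl (k, p))) c * z c = (Fx *m zx z k) p 0.
Proof.
rewrite zsum /=.
transitivity (\sum_(m : 'I_T) (m == k)%:R * (Fx *m zx z m) p 0); last exact: gsum_pick.
apply: eq_bigr => m _; rewrite [X in _ + X]big1 ?addr0; last by move=> l _; rewrite mul0r.
rewrite mxE mulr_sumr; apply: eq_bigr => l _; rewrite zx_in; ring.
Qed.

Lemma grow_u T z (k : 'I_T) (p : 'I_pu) :
  \sum_c grad A B Fx Fu (inr (inr (k, p))) c * z c = (Fu *m zu z k) p 0.
Proof.
rewrite zsum /=.
transitivity (\sum_(m : 'I_T) (m == k)%:R * (Fu *m zu z m) p 0); last exact: gsum_pick.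
apply: eq_bigr => m _; rewrite [X in X + _]big1 ?add0r; last by move=> l _; rewrite mul0r.
rewrite mxE mulr_sumr; apply: eq_bigr => l _; rewrite zu_in; ring.
Qed.

Lemma grow_eq T z (k : 'I_T.+1) (i : 'I_n) :
  \sum_c grad A B Fx Fu (inl (k, i)) c * z c =
  (zx z k - (if (k == 0 :> nat) then 0 else A *m zx z k.-1 + B *m zu z k.-1)) i 0.
Proof.
rewrite zsum /=.
have E1 : forall m : 'I_T, \sum_(l < n)
    (((m == k :> nat) && (l == i))%:R - (m.+1 == k :> nat)%:R * A i l) * z (m, inl l)
  = (m == k :> nat)%:R * zx z m i 0 - (m.+1 == k :> nat)%:R * (A *m zx z m) i 0.
  move=> m; rewrite mxE mulr_sumr.
  under eq_bigr => l _ do rewrite mulrBl.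
  rewrite sumrB; congr (_ - _).
    rewrite (bigD1 i) //= eqxx andbT big1 ?addr0 ?zx_in // => l /negbTE ->.
    by rewrite andbF mul0r.
  by apply: eq_bigr => l _; rewrite zx_in mulrA.
have E2 : forall m : 'I_T, \sum_(l < d) - ((m.+1 == k :> nat)%:R * B i l) * z (m, inr l)
  = - ((m.+1 == k :> nat)%:R * (B *m zu z m) i 0).
  move=> m; rewrite mxE mulr_sumr -sumrN; apply: eq_bigr => l _.
  by rewrite zu_in mulNr mulrA.
under eq_bigr => m _ do rewrite E1 E2.
rewrite big_split /= sumrB sumrN.
have Hz : forall j, (T <= j)%N -> zx z j i 0 = 0 by move=> j Tj; rewrite zx_out // mxE.
rewrite (sum_pick _ Hz).
rewrite (sum_pickS (f := fun m => (A *m zx z m) i 0)); last first.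
  by move=> j Tj; rewrite zx_out // mulmx0 mxE.
rewrite (sum_pickS (f := fun m => (B *m zu z m) i 0)); last first.
  by move=> j Tj; rewrite zu_out // mulmx0 mxE.
rewrite !mxE; case: ifP => _; rewrite ?mxE; ring.
Qed.

End Rows.

Section Win.
Context {R : realType} {n d px pu : nat}
  (A : 'M[R]_n) (B : 'M[R]_(n, d))
  (Fx : 'M[R]_(px, n)) (bx : 'cV[R]_px) (Fu : 'M[R]_(pu, d)) (bu : 'cV[R]_pu)
  (Q : 'M[R]_n) (Rc : 'M[R]_d).
Hypothesis HQs : Q^T = Q.
Hypothesis HQp : forall y, 0 <= bf Q y y.
Hypothesis HRs : Rc^T = Rc.
Hypothesis HRp : forall y, 0 <= bf Rc y y.

Definition adm T (x : nat -> 'cV[R]_n) (u : nat -> 'cV[R]_d)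
    (dx : nat -> 'cV[R]_n) (du : nat -> 'cV[R]_d) : Prop :=
 [/\ dx 0%N = 0, dx T = 0,
     forall k, (k < T)%N -> dx k.+1 = A *m dx k + B *m du k,
     forall k p, (k < T)%N -> (Fx *m x k) p 0 = bx p 0 -> (Fx *m dx k) p 0 <= 0 &
     forall k p, (k < T)%N -> (Fu *m u k) p 0 = bu p 0 -> (Fu *m du k) p 0 <= 0].

Definition Dlin T (x : nat -> 'cV[R]_n) (u : nat -> 'cV[R]_d)
    (dx : nat -> 'cV[R]_n) (du : nat -> 'cV[R]_d) :=
  \sum_(k < T) (bf Q (x k) (dx k) + bf Rc (u k) (du k)).
Definition Dq T (dx : nat -> 'cV[R]_n) (du : nat -> 'cV[R]_d) :=
  \sum_(k < T) (bf Q (dx k) (dx k) + bf Rc (du k) (du k)).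

Lemma hE' x u : stage_cost Q Rc x u = bf Q x x + bf Rc u u.
Proof. by []. Qed.

Lemma Dq_ge0 T dx du : 0 <= Dq T dx du.
Proof. by apply: sumr_ge0 => k _; apply: addr_ge0. Qed.

Lemma cost_exp T x u dx du s :
  fh_cost Q Rc T (fun k => x k + s *: dx k) (fun k => u k + s *: du k) =
  fh_cost Q Rc T x u + 2 * s * Dlin T x u dx du + s ^+ 2 * Dq T dx du.
Proof.
rewrite /fh_cost /Dlin /Dq !mulr_sumr -!big_split /=; apply: eq_bigr => k _.
rewrite !hE' !bf_sq //; ring.
Qed.

Lemma inPoly_lin {p m} (F : 'M[R]_(p, m)) (v w : 'cV[R]_m) s q :
  (F *m (v + s *: w)) q 0 = (F *m v) q 0 + s * (F *m w) q 0.
Proof. by rewrite mulmxDr -scalemxAr !mxE. Qed.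

Lemma slack_ok (s a sig : R) : 0 < s -> 0 < sig -> s <= sig / (`|a| + 1) -> s * a <= sig.
Proof.
move=> s0 sg H.
have H1 : s * (`|a| + 1) <= sig by rewrite -ler_pdivlMr // ltr_pwDr // ?normr_ge0.
have H2 : a <= `|a| := ler_norm a.
have H3 : 0 <= `|a| := normr_ge0 a.
nra.
Qed.

Lemma FO T x0 xT x u dx du :
  fh_optimal A B Fx bx Fu bu Q Rc T x0 xT x u -> adm T x u dx du ->
  0 <= Dlin T x u dx du.
Proof.
move=> [[Hx0 Hk HxT] Hopt] [d0 dT ddyn dfx dfu].
pose ex (kp : 'I_T * 'I_px) :=
  if (Fx *m x kp.1) kp.2 0 == bx kp.2 0 then 1
  else (bx kp.2 0 - (Fx *m x kp.1) kp.2 0) / (`|(Fx *m dx kp.1) kp.2 0| + 1).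
pose eu (kp : 'I_T * 'I_pu) :=
  if (Fu *m u kp.1) kp.2 0 == bu kp.2 0 then 1
  else (bu kp.2 0 - (Fu *m u kp.1) kp.2 0) / (`|(Fu *m du kp.1) kp.2 0| + 1).
have ex_pos : forall kp, 0 < ex kp.
  move=> [k p]; rewrite /ex /=; case: eqP => // Ne.
  have [_ Hf _] := Hk k (ltn_ord k).
  apply: divr_gt0; last by rewrite ltr_pwDr ?normr_ge0.
  by rewrite subr_gt0 lt_neqAle Hf andbT; apply/eqP.
have eu_pos : forall kp, 0 < eu kp.
  move=> [k p]; rewrite /eu /=; case: eqP => // Ne.
  have [_ _ Hf] := Hk k (ltn_ord k).
  apply: divr_gt0; last by rewrite ltr_pwDr ?normr_ge0.
  by rewrite subr_gt0 lt_neqAle Hf andbT; apply/eqP.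
pose s0 := Num.min (\big[Num.min/1]_kp ex kp) (\big[Num.min/1]_kp eu kp).
have s0_pos : 0 < s0.
  rewrite lt_min; apply/andP; split.
    by apply: (big_ind (fun v => 0 < v)) => // a b Ha Hb; rewrite lt_min Ha Hb.
  by apply: (big_ind (fun v => 0 < v)) => // a b Ha Hb; rewrite lt_min Ha Hb.
have feas : forall s, 0 < s -> s <= s0 ->
    fh_feasible A B Fx bx Fu bu T x0 xT (fun k => x k + s *: dx k) (fun k => u k + s *: du k).
  move=> s sp ss0; split.
  - by rewrite d0 scaler0 addr0.
  - move=> k kT; have [E Hfx Hfu] := Hk k kT; split.
    + by rewrite E ddyn // mulmxDr mulmxDr scalerDr -!scalemxAr; rewrite addrACA.
    + move=> p; rewrite inPoly_lin.
      have [Ea|Na] := eqVneq ((Fx *m x k) p 0) (bx p 0).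
        have := dfx k p kT Ea; rewrite Ea; nra.
      have Hs : s <= ex (Ordinal kT, p).
        apply: le_trans ss0 _; rewrite ge_min; apply/orP; left.
        exact: (bigmin_le _ (Ordinal kT, p)).
      move: Hs; rewrite /ex /= (negbTE Na) => Hs.
      have sg : 0 < bx p 0 - (Fx *m x k) p 0 by rewrite subr_gt0 lt_neqAle Na Hfx.
      have := slack_ok sp sg Hs; lra.
    + move=> p; rewrite inPoly_lin.
      have [Ea|Na] := eqVneq ((Fu *m u k) p 0) (bu p 0).
        have := dfu k p kT Ea; rewrite Ea; nra.
      have Hs : s <= eu (Ordinal kT, p).
        apply: le_trans ss0 _; rewrite ge_min; apply/orP; right.
        exact: (bigmin_le _ (Ordinal kT, p)).
      move: Hs; rewrite /eu /= (negbTE Na) => Hs.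
      have sg : 0 < bu p 0 - (Fu *m u k) p 0 by rewrite subr_gt0 lt_neqAle Na Hfu.
      have := slack_ok sp sg Hs; lra.
  - by rewrite dT scaler0 addr0.
have key : forall s, 0 < s -> s <= s0 -> 0 <= 2 * Dlin T x u dx du + s * Dq T dx du.
  move=> s sp ss0; have := Hopt _ _ (feas s sp ss0); rewrite cost_exp => H.
  have : 0 <= s * (2 * Dlin T x u dx du + s * Dq T dx du) by move: H; rewrite expr2 => H; nra.
  by rewrite pmulr_rge0.
rewrite leNgt; apply/negP => DN.
have q0 := Dq_ge0 T dx du.
pose s := Num.min s0 (- Dlin T x u dx du / (Dq T dx du + 1)).
have sp : 0 < s by rewrite lt_min s0_pos /= divr_gt0 ?oppr_gt0 //; lra.
have ss0 : s <= s0 by rewrite ge_min lexx.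
have ss1 : s * (Dq T dx du + 1) <= - Dlin T x u dx du.
  rewrite -ler_pdivlMr; last lra.
  by rewrite ge_min lexx orbT.
have := key s sp ss0; nra.
Qed.

Lemma sum_split' (f : nat -> R) T M : (T <= M)%N ->
  \sum_(k < M) f k = \sum_(k < T) f k + \sum_(T <= k < M) f k.
Proof.
move=> TM; rewrite -(@big_mkord _ _ _ M xpredT f) -(@big_mkord _ _ _ T xpredT f).
by rewrite (@big_cat_nat _ _ _ T 0 M xpredT f (leq0n T) TM).
Qed.

Section Decomp.
Variables (N : nat) (x : nat -> 'cV[R]_n) (u : nat -> 'cV[R]_d).
Hypothesis HN : (0 < N)%N.
Hypothesis Hwin : forall t T, (T <= N)%N -> forall dx du,
  adm T (fun k => x (t + k)%N) (fun k => u (t + k)%N) dx du ->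
  0 <= Dlin T (fun k => x (t + k)%N) (fun k => u (t + k)%N) dx du.
Hypothesis Hlicq : forall t, (1 <= t)%N ->
  licq A B Fx bx Fu bu N.-1 (fun k => x (t + k)%N) (fun k => u (t + k)%N).

Lemma decomp_step t T1 dx du : (N <= T1)%N ->
  adm T1.+1 (fun k => x (t + k)%N) (fun k => u (t + k)%N) dx du ->
  exists d2x d2u,
   adm T1 (fun k => x (t.+1 + k)%N) (fun k => u (t.+1 + k)%N) d2x d2u /\
   Dlin T1 (fun k => x (t.+1 + k)%N) (fun k => u (t.+1 + k)%N) d2x d2u <=
   Dlin T1.+1 (fun k => x (t + k)%N) (fun k => u (t + k)%N) dx du.
Proof.
move=> NT1 [d0 dT ddyn dfx dfu].
set T' := N.-1.
have NE : N = T'.+1 by rewrite /T' prednK.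
set xs := fun k => x (t.+1 + k)%N; set us := fun k => u (t.+1 + k)%N.
have LI := Hlicq (ltn0Sn t).
pose rhs (r : crow n px pu T') : R := match r with
  | inl (k, i) => if (k == 0 :> nat) then dx 1%N i 0 else 0
  | inr (inl (k, p)) => (Fx *m dx k.+1) p 0
  | inr (inr (k, p)) => (Fu *m du k.+1) p 0 end.
have [z Hz] := lin_solve LI rhs.
set wx := zx z; set wu := zu z.
have E0 : forall (k : 'I_T'.+1) i,
  (wx k - (if (k == 0 :> nat) then 0 else A *m wx k.-1 + B *m wu k.-1)) i 0 =
  (if (k == 0 :> nat) then dx 1%N i 0 else 0).
  by move=> k i; rewrite -(grow_eq A B Fx Fu) (Hz (inl (k, i))).
have W0 : wx 0%N = dx 1%N.
  apply/matrixP => i j; rewrite ord1.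
  by have := E0 ord0 i; rewrite /= subr0.
have Wdyn : forall k, wx k.+1 = A *m wx k + B *m wu k.
  move=> k; case: (ltnP k.+1 T'.+1) => kT.
    apply/matrixP => i j; rewrite ord1.
    have := E0 (Ordinal kT) i; rewrite /= => E; rewrite !mxE in E *; lra.
  have kT' : (T' <= k)%N by rewrite -ltnS.
  by rewrite /wx /wu !zx_out ?zu_out ?mulmx0 ?addr0 // ltnW.
have Ex : forall k p, (k < T')%N -> (Fx *m xs k) p 0 = bx p 0 ->
    (Fx *m wx k) p 0 = (Fx *m dx k.+1) p 0.
  move=> k p kT Ea; have := Hz (inr (inl (Ordinal kT, p))).
  by rewrite (grow_x A B Fx Fu) /= Ea eqxx => ->.
have Eu : forall k p, (k < T')%N -> (Fu *m us k) p 0 = bu p 0 ->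
    (Fu *m wu k) p 0 = (Fu *m du k.+1) p 0.
  move=> k p kT Ea; have := Hz (inr (inr (Ordinal kT, p))).
  by rewrite (grow_u A B Fx Fu) /= Ea eqxx => ->.
have wx_out : forall k, (T' <= k)%N -> wx k = 0 by move=> k Hk; rewrite /wx zx_out.
have wu_out : forall k, (T' <= k)%N -> wu k = 0 by move=> k Hk; rewrite /wu zu_out.
have NT : (N < T1.+1)%N by rewrite ltnS.
pose d1x j := if j is j'.+1 then wx j' else 0.
pose d1u j := if j is j'.+1 then wu j' else du 0%N.
have adm1 : adm N (fun k => x (t + k)%N) (fun k => u (t + k)%N) d1x d1u.
  split.
  - by [].
  - by rewrite NE /d1x wx_out.
  - move=> [|k] kN /=.
      by rewrite W0 ddyn // d0 mulmx0 add0r.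
    exact: Wdyn.
  - move=> [|k] p kN /= Ea; first by rewrite mulmx0 mxE.
    have kT' : (k < T')%N by rewrite -ltnS -NE.
    rewrite Ex //; last by rewrite /xs addSnnS.
    by apply: dfx => //; apply: leq_trans kN _; apply: ltnW.
  - move=> [|k] p kN /= Ea; first by apply: dfu.
    have kT' : (k < T')%N by rewrite -ltnS -NE.
    rewrite Eu //; last by rewrite /us addSnnS.
    by apply: dfu => //; apply: leq_trans kN _; apply: ltnW.
pose d2x j := dx j.+1 - wx j.
pose d2u j := du j.+1 - wu j.
exists d2x, d2u; split.
  split.
  - by rewrite /d2x W0 subrr.
  - rewrite /d2x dT wx_out ?subr0 //.
    exact: leq_trans (leq_pred N) NT1.
  - move=> k kT; rewrite /d2x /d2u Wdyn ddyn //.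
    by rewrite !mulmxBr opprD addrACA.
  - move=> k p kT Ea.
    have EB : forall a b : 'cV[R]_px, (a - b) p 0 = a p 0 - b p 0 by move=> a b; rewrite !mxE.
    rewrite /d2x mulmxBr.
    have Ea' : (Fx *m x (t + k.+1)%N) p 0 = bx p 0 by rewrite -addSnnS.
    case: (ltnP k T') => kT'.
      by rewrite EB Ex // subrr.
    rewrite wx_out // mulmx0 subr0; exact: dfx.
  - move=> k p kT Ea.
    have EB : forall a b : 'cV[R]_pu, (a - b) p 0 = a p 0 - b p 0 by move=> a b; rewrite !mxE.
    rewrite /d2u mulmxBr.
    have Ea' : (Fu *m u (t + k.+1)%N) p 0 = bu p 0 by rewrite -addSnnS.
    case: (ltnP k T') => kT'.
      by rewrite EB Eu // subrr.
    rewrite wu_out // mulmx0 subr0; exact: dfu.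
have H1 := Hwin (leqnn N) adm1.
suff -> : Dlin T1.+1 (fun k => x (t + k)%N) (fun k => u (t + k)%N) dx du =
  Dlin N (fun k => x (t + k)%N) (fun k => u (t + k)%N) d1x d1u +
  Dlin T1 (fun k => x (t.+1 + k)%N) (fun k => u (t.+1 + k)%N) d2x d2u.
  lra.
have -> : Dlin N (fun k => x (t + k)%N) (fun k => u (t + k)%N) d1x d1u =
   Dlin T1.+1 (fun k => x (t + k)%N) (fun k => u (t + k)%N) d1x d1u.
  rewrite /Dlin (sum_split' (fun k => bf Q (x (t + k)%N) (d1x k) + bf Rc (u (t + k)%N) (d1u k)) (ltnW NT)) [X in _ = _ + X]big1_seq ?addr0 //.
  move=> k /andP [_]; rewrite mem_index_iota => /andP [Nk _].
  case: k Nk => [|k] Nk; first by move: Nk; rewrite leqn0 => /eqP NN; move: HN; rewrite NN.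
  by rewrite /d1x /d1u /= wx_out ?wu_out ?bf0r ?addr0 // -ltnS -NE.
rewrite /Dlin !big_ord_recl /= d0 -[in RHS]addrA; congr (_ + _).
rewrite -big_split /=; apply: eq_bigr => k _; rewrite /d2x /d2u /bump /= add1n add0n addSnnS.
by rewrite !bfBr; ring.
Qed.

Lemma decomp T t dx du :
  adm T (fun k => x (t + k)%N) (fun k => u (t + k)%N) dx du ->
  0 <= Dlin T (fun k => x (t + k)%N) (fun k => u (t + k)%N) dx du.
Proof.
elim: T {-2}T (leqnn T) t dx du => [|M IH] T TM t dx du Had.
  by apply: Hwin => //; move: TM; rewrite leqn0 => /eqP ->.
case: (leqP T N) => TN; first exact: Hwin.
case: T TM TN Had => [//|T1] TM TN Had.
have NT1 : (N <= T1)%N by rewrite -ltnS.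
have [d2x [d2u [Had2 Hle]]] := decomp_step NT1 Had.
exact: le_trans (IH T1 TM _ _ _ Had2) Hle.
Qed.

End Decomp.

Lemma adm_diff T x0 xT x u x' u' :
  fh_feasible A B Fx bx Fu bu T x0 xT x u ->
  fh_feasible A B Fx bx Fu bu T x0 xT x' u' ->
  adm T x u (fun k => x' k - x k) (fun k => u' k - u k).
Proof.
move=> [Hx0 Hk HxT] [Hx0' Hk' HxT']; split.
- by rewrite Hx0 Hx0' subrr.
- by rewrite HxT HxT' subrr.
- move=> k kT; have [E _ _] := Hk k kT; have [E' _ _] := Hk' k kT.
  by rewrite E E' !mulmxBr opprD addrACA.
- move=> k p kT Ea; have [_ _ _] := Hk k kT; have [_ H' _] := Hk' k kT.
  rewrite mulmxBr.
  have -> : (Fx *m x' k - Fx *m x k) p 0 = (Fx *m x' k) p 0 - (Fx *m x k) p 0.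
    by rewrite [LHS]mxE [X in _ + X]mxE.
  have := H' p; lra.
- move=> k p kT Ea; have [_ _ _] := Hk k kT; have [_ _ H'] := Hk' k kT.
  rewrite mulmxBr.
  have -> : (Fu *m u' k - Fu *m u k) p 0 = (Fu *m u' k) p 0 - (Fu *m u k) p 0.
    by rewrite [LHS]mxE [X in _ + X]mxE.
  have := H' p; lra.
Qed.

Lemma cost_diff T x u x' u' : fh_cost Q Rc T x' u' =
  fh_cost Q Rc T x u + 2 * Dlin T x u (fun k => x' k - x k) (fun k => u' k - u k)
    + Dq T (fun k => x' k - x k) (fun k => u' k - u k).
Proof.
have -> : fh_cost Q Rc T x' u' = fh_cost Q Rc T (fun k => x k + 1 *: (x' k - x k))
    (fun k => u k + 1 *: (u' k - u k)).
  by apply: eq_bigr => k _; rewrite !scale1r !(addrC (x k)) !(addrC (u k)) !subrK.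
by rewrite cost_exp mulr1 expr1n mul1r.
Qed.

Lemma opt_from_FO T x0 xT x u :
  (forall y, y != 0 -> 0 < bf Rc y y) ->
  fh_feasible A B Fx bx Fu bu T x0 xT x u ->
  (forall dx du, adm T x u dx du -> 0 <= Dlin T x u dx du) ->
  fh_optimizer A B Fx bx Fu bu Q Rc T x0 xT x u.
Proof.
move=> HRpd Hf HD.
split.
  split => // x' u' Hf'; rewrite (cost_diff T x u x' u').
  have := HD _ _ (adm_diff Hf Hf'); have := Dq_ge0 T (fun k => x' k - x k) (fun k => u' k - u k).
  lra.
move=> x' u' [Hf' Hopt'].
have Hle := Hopt' x u Hf; rewrite (cost_diff T x u x' u') in Hle.
have D0 := HD _ _ (adm_diff Hf Hf').
have q0 := Dq_ge0 T (fun k => x' k - x k) (fun k => u' k - u k).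
have q00 : Dq T (fun k => x' k - x k) (fun k => u' k - u k) = 0 by lra.
have Hterm := psumr_eq0P (fun k _ => addr_ge0 (HQp _) (HRp _)) q00.
have Hu : forall k, (k < T)%N -> u' k = u k.
  move=> k kT; have := Hterm (Ordinal kT) isT => /= Hs.
  have Hr : bf Rc (u' k - u k) (u' k - u k) = 0.
    have := HQp (x' k - x k); have := HRp (u' k - u k); lra.
  apply/eqP; rewrite -subr_eq0; apply/negPn/negP => Hne.
  by have := HRpd _ Hne; rewrite Hr ltxx.
split => //.
case: Hf => Hx0 Hk _; case: Hf' => Hx0' Hk' _.
elim=> [|k IH] kT; first by rewrite Hx0 Hx0'.
have [E _ _] := Hk k kT; have [E' _ _] := Hk' k kT.
rewrite E E' IH; last exact: ltnW.
by rewrite Hu.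
Qed.

End Win.

Lemma big_shiftk (T : Type) (idx : T) (op : T -> T -> T) (f : nat -> T) k K :
  \big[op/idx]_(k <= m < k + K) f m = \big[op/idx]_(s < K) f (k + s)%N.
Proof.
rewrite -{1}(add0n k) big_addn addKn big_mkord; apply: eq_bigr => s _.
by rewrite addnC.
Qed.

Section LM.
Context {R : realType} {n d px pu : nat}
  (A : 'M[R]_n) (B : 'M[R]_(n, d))
  (Fx : 'M[R]_(px, n)) (bx : 'cV[R]_px) (Fu : 'M[R]_(pu, d)) (bu : 'cV[R]_pu)
  (Q : 'M[R]_n) (Rc : 'M[R]_d) (N : nat) (xS : 'cV[R]_n)
  (X : nat -> nat -> 'cV[R]_n) (U : nat -> nat -> 'cV[R]_d) (c : nat).
Hypothesis HQ : psd Q.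
Hypothesis HR : pd Rc.
Hypothesis HN : (0 < N)%N.
Hypothesis HX0 : forall j, X j 0%N = xS.
Hypothesis Hdyn : forall j t, X j t.+1 = A *m X j t + B *m U j t.
Hypothesis Hf0 : forall t, inPoly Fx bx (X 0%N t) /\ inPoly Fu bu (U 0%N t).
Hypothesis Hc0 : (costtogo Q Rc X U 0 0 < +oo)%E.
Hypothesis Hlmpc : forall j t, (0 < j)%N ->
     exists xp up, lmpc_optimal A B Fx bx Fu bu Q Rc N X U j.-1 (X j t) xp up
                   /\ U j t = up 0%N.
Hypothesis Hfix : forall j, (c <= j)%N -> X j = X c /\ U j = U c.

Local Notation h := (stage_cost Q Rc).

Lemma Q_ge0 y : 0 <= bf Q y y.
Proof. by case: HQ => _ /(_ y). Qed.
Lemma R_ge0 y : 0 <= bf Rc y y.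
Proof.
case: HR => _ H; have [->|/H/ltW //] := eqVneq y 0.
by rewrite bf0l.
Qed.
Lemma hE x u : h x u = bf Q x x + bf Rc u u.
Proof. by []. Qed.
Lemma h_ge0 x u : 0 <= h x u.
Proof. by rewrite hE addr_ge0 // ?Q_ge0 ?R_ge0. Qed.

Lemma data_feas i k : inPoly Fx bx (X i k) /\ inPoly Fu bu (U i k).
Proof.
case: i => [|i]; first exact: Hf0.
have [xp [up [[[H0 Hk _] _] ->]]] := Hlmpc k (ltn0Sn i).
have [_ H1 H2] := Hk 0%N HN.
by rewrite -H0.
Qed.

Lemma ct_ge0 i k : (0 <= costtogo Q Rc X U i k)%E.
Proof. by apply: nneseries_ge0 => m _ _; rewrite lee_fin h_ge0. Qed.

Lemma ct_split i k K : costtogo Q Rc X U i k =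
  ((\sum_(s < K) h (X i (k + s)%N) (U i (k + s)%N))%:E + costtogo Q Rc X U i (k + K))%E.
Proof.
rewrite /costtogo (@nneseries_split _ _ k K); last by move=> m _; rewrite lee_fin h_ge0.
congr (_ + _)%E; rewrite sumEFin; congr (_%:E).
rewrite -{1}(add0n k) big_addn addKn big_mkord; apply: eq_bigr => s _.
by rewrite addnC.
Qed.

Lemma ct_step i k : costtogo Q Rc X U i k =
  ((h (X i k) (U i k))%:E + costtogo Q Rc X U i k.+1)%E.
Proof. by rewrite (ct_split i k 1) big_ord1 !addn0 addn1. Qed.

Lemma ct_bound i k (y : \bar R) :
  (forall K, ((\sum_(s < K) h (X i (k + s)%N) (U i (k + s)%N))%:E <= y)%E) ->
  (costtogo Q Rc X U i k <= y)%E.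
Proof.
move=> HK; rewrite /costtogo.
have Hpos : forall m, (k <= m)%N -> xpredT m -> (0 <= (h (X i m) (U i m))%:E)%E.
  by move=> m _ _; rewrite lee_fin h_ge0.
have Hc := ereal_nondecreasing_cvgn (ereal_nondecreasing_series Hpos).
rewrite (cvg_lim _ Hc) //.
apply: ge_ereal_sup => _ [K _ <-] /=.
have [kK|Kk] := leqP k K.
  move: (HK (K - k)%N); rewrite -sumEFin -(@big_shiftk _ _ _ (fun m => (h (X i m) (U i m))%:E)) subnKC //; by [].
rewrite big_geq; last exact: ltnW.
by apply: le_trans (HK 0%N); rewrite big_ord0.
Qed.

Lemma V_ge0 j x : (0 <= Vfun Q Rc X U j x)%E.
Proof.
apply: le_ereal_inf_tmp => _ [M [gam [[g0 _ _] ->]]].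
apply: sume_ge0 => i _; apply: sume_ge0 => k _; apply: mule_ge0; last exact: ct_ge0.
by rewrite lee_fin.
Qed.

Lemma V_le j x M gam : conv_weights X j x M gam ->
  (Vfun Q Rc X U j x <=
     \sum_(i < j.+1) \sum_(k < M) (gam i k)%:E * costtogo Q Rc X U i k)%E.
Proof. by move=> H; apply: ereal_inf_lbound; exists M, gam. Qed.

Definition gam1 (i0 k0 : nat) (i k : nat) : R :=
  if (i == i0) && (k == k0) then 1 else 0.

Lemma dsum_pick (T : Type) (idx : T) (op : Monoid.com_law idx) a b i0 k0
  (F : nat -> nat -> T) : (i0 < a)%N -> (k0 < b)%N ->
  \big[op/idx]_(i < a) \big[op/idx]_(k < b)
     (if (i == i0 :> nat) && (k == k0 :> nat) then F i k else idx) = F i0 k0.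
Proof.
move=> ia kb; rewrite (bigD1 (Ordinal ia)) //= eqxx /=.
rewrite (bigD1 (Ordinal kb)) //= eqxx /= big1; last first.
  move=> k /= Hk; case: eqP => // Ek; case/eqP: Hk; exact: val_inj.
rewrite Monoid.mulm1 big1 ?Monoid.mulm1 // => i Hi.
apply: big1 => k _; case: eqP => //= Ei; case/eqP: Hi; exact: val_inj.
Qed.

Lemma ifscale (V : lmodType R) (b : bool) (v : V) :
  (if b then (1 : R) else 0) *: v = if b then v else 0.
Proof. by case: b; rewrite ?scale1r ?scale0r. Qed.

Lemma ifmule (b : bool) (e : \bar R) :
  ((if b then (1 : R) else 0)%:E * e)%E = if b then e else 0%E.
Proof. by case: b; rewrite ?mul1e ?mul0e. Qed.

Lemma cw_ind j i0 k0 : (i0 <= j)%N -> conv_weights X j (X i0 k0) k0.+1 (gam1 i0 k0).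
Proof.
move=> ij; split.
- by move=> i k; rewrite /gam1; case: ifP.
- by rewrite /gam1 (@dsum_pick _ _ _ _ _ _ _ (fun _ _ => (1:R))).
- rewrite /gam1.
  under eq_bigr => i _ do under eq_bigr => k _ do rewrite ifscale.
  by rewrite (@dsum_pick _ _ _ _ _ _ _ (fun i k => X i k)).
Qed.

Lemma inCS_data j i0 k0 : (i0 <= j)%N -> inCS X j (X i0 k0).
Proof. by move=> ij; exists k0.+1, (gam1 i0 k0); apply: cw_ind. Qed.

Lemma V_le_ct j i0 k0 : (i0 <= j)%N ->
  (Vfun Q Rc X U j (X i0 k0) <= costtogo Q Rc X U i0 k0)%E.
Proof.
move=> ij; apply: le_trans (V_le (cw_ind k0 ij)) _.
rewrite /gam1.
under eq_bigr => i _ do under eq_bigr => k _ do rewrite ifmule.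
by rewrite (@dsum_pick _ _ _ _ _ _ _ (fun i k => costtogo Q Rc X U i k)).
Qed.

Lemma Lopt t : exists xp up,
  lmpc_optimal A B Fx bx Fu bu Q Rc N X U c (X c t) xp up /\ U c t = up 0%N.
Proof.
have [xp [up [H1 H2]]] := Hlmpc t (ltn0Sn c).
have [E1 E2] := Hfix (leqnSn c).
rewrite E1 /= in H1; rewrite E2 in H2.
by exists xp, up.
Qed.

Definition Jstar t : \bar R := ereal_inf [set v | exists xp up,
  lmpc_feasible A B Fx bx Fu bu N X c (X c t) xp up /\
  v = lmpc_cost Q Rc N X U c xp up].

Lemma Jstar_le t xp up : lmpc_feasible A B Fx bx Fu bu N X c (X c t) xp up ->
  (Jstar t <= lmpc_cost Q Rc N X U c xp up)%E.
Proof. by move=> H; apply: ereal_inf_lbound; exists xp, up. Qed.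

Lemma Jstar_opt t xp up : lmpc_optimal A B Fx bx Fu bu Q Rc N X U c (X c t) xp up ->
  lmpc_cost Q Rc N X U c xp up = Jstar t.
Proof.
case=> Hf Ho; apply/eqP; rewrite eq_le; apply/andP; split; last exact: Jstar_le.
by apply: le_ereal_inf_tmp => _ [xp' [up' [Hf' ->]]]; apply: Ho.
Qed.

Lemma lcost_ge0 xp up : (0 <= lmpc_cost Q Rc N X U c xp up)%E.
Proof.
apply: adde_ge0; last exact: V_ge0.
by rewrite lee_fin; apply: sumr_ge0 => k _; apply: h_ge0.
Qed.

Lemma Jstar_ge0 t : (0 <= Jstar t)%E.
Proof.
have [xp [up [Ho _]]] := Lopt t; rewrite -(Jstar_opt Ho); exact: lcost_ge0.
Qed.

Lemma F1 t : ((h (X c t) (U c t))%:E + Jstar t.+1 <= Jstar t)%E.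
Proof.
have [xp [up [[Hfe Hopt] Hu]]] := Lopt t.
rewrite -(Jstar_opt (conj Hfe Hopt)).
case: (Hfe) => Hx0 Hk HCS.
have [N' EN] : exists N', N = N'.+1 by exists N.-1; rewrite prednK.
set S := \sum_(k < N) h (xp k) (up k).
rewrite /lmpc_cost -/S -leeBlDl //.
apply: le_ereal_inf_tmp => _ [M [gam [Hcw ->]]].
rewrite leeBlDl //.
case: (Hcw) => g0 g1 gx.
set uN := \sum_(i < c.+1) \sum_(k < M) gam i k *: U i k.
set xN' := \sum_(i < c.+1) \sum_(k < M) gam i k *: X i k.+1.
pose xp' k := if k == N then xN' else xp k.+1.
pose up' k := if k == N' then uN else up k.+1.
pose gam' i k := if k is k'.+1 then gam i k' else 0.
have Ha : xN' = A *m xp N + B *m uN.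
  rewrite -gx /xN' /uN !mulmx_dsum -big_split /=; apply: eq_bigr => i _.
  rewrite -big_split /=; apply: eq_bigr => k _.
  by rewrite Hdyn scalerDr.
have Hcw' : conv_weights X c xN' M.+1 gam'.
  split.
  - by move=> i [|k] //=.
  - rewrite -g1; apply: eq_bigr => i _; rewrite big_ord_recl /= add0r.
    by apply: eq_bigr => k _; rewrite ?lift0.
  - apply: eq_bigr => i _; rewrite big_ord_recl /= scale0r add0r.
    by apply: eq_bigr => k _; rewrite ?lift0.
have HxN : inPoly Fx bx (xp N).
  by rewrite -gx; apply: inPoly_conv2 => // i k; case: (data_feas i k).
have HuN : inPoly Fu bu uN.
  by apply: inPoly_conv2 => // i k; case: (data_feas i k).
have Hfe' : lmpc_feasible A B Fx bx Fu bu N X c (X c t.+1) xp' up'.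
  split.
  - rewrite /xp' ifN_eq; last by rewrite eq_sym -lt0n.
    by have [-> _ _] := Hk 0%N HN; rewrite Hx0 -Hu Hdyn.
  - move=> k kN; rewrite /xp' /up' (ltn_eqF kN) /=.
    have [EkN|NkN] := eqVneq k N'.
      by rewrite EkN -EN !eqxx.
    have kN1 : (k.+1 < N)%N by rewrite EN ltnS ltn_neqAle NkN -ltnS -EN.
    rewrite (ltn_eqF kN1) /=.
    by have [-> H2 H3] := Hk k.+1 kN1.
  - by rewrite /xp' eqxx; exists M.+1, gam'.
have H1 := Jstar_le Hfe'.
have H2 := V_le Hcw'.
have ExN : xp' N = xN' by rewrite /xp' eqxx.
rewrite /lmpc_cost ExN in H1.
have Ev' : (\sum_(i < c.+1) \sum_(k < M.+1) (gam' i k)%:E * costtogo Q Rc X U i k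
   = \sum_(i < c.+1) \sum_(k < M) (gam i k)%:E * costtogo Q Rc X U i k.+1)%E.
  apply: eq_bigr => i _; rewrite big_ord_recl /= mul0e add0e.
  by apply: eq_bigr => k _; rewrite ?lift0.
have Ev : (\sum_(i < c.+1) \sum_(k < M) (gam i k)%:E * costtogo Q Rc X U i k
   = ((\sum_(i < c.+1) \sum_(k < M) gam i k * h (X i k) (U i k))%:E +
     \sum_(i < c.+1) \sum_(k < M) (gam i k)%:E * costtogo Q Rc X U i k.+1))%E.
  rewrite -sumEFin -big_split /=; apply: eq_bigr => i _.
  rewrite -sumEFin -big_split /=; apply: eq_bigr => k _.
  by rewrite ct_step ge0_muleDr ?lee_fin ?h_ge0 ?ct_ge0 // EFinM.
have Hjen : h (xp N) uN <= \sum_(i < c.+1) \sum_(k < M) gam i k * h (X i k) (U i k).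
  rewrite hE -gx.
  have J1 := bf_jensen2 Q c.+1 M gam X (proj1 HQ) Q_ge0 g0 g1.
  have J2 := bf_jensen2 Rc c.+1 M gam U (proj1 HR) R_ge0 g0 g1.
  apply: le_trans (lerD J1 J2) _; rewrite -!big_split /= le_eqVlt; apply/orP; left.
  apply/eqP; apply: eq_bigr => i _; rewrite -big_split /=; apply: eq_bigr => k _.
  by rewrite hE mulrDr.
have NN : (N' == N) = false by rewrite EN ltn_eqF.
have ES : S = h (xp 0%N) (up 0%N) + \sum_(k < N') h (xp k.+1) (up k.+1).
  by rewrite /S EN big_ord_recl; congr (_ + _); apply: eq_bigr => k _; rewrite lift0.
have ES' : \sum_(k < N) h (xp' k) (up' k) =
    \sum_(k < N') h (xp k.+1) (up k.+1) + h (xp N) uN.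
  rewrite EN big_ord_recr; congr (_ + _).
    apply: eq_bigr => k _; rewrite /xp' /up' /=.
    have kN' : (k < N')%N := ltn_ord k.
    rewrite (ltn_eqF kN') ifN_eq //.
    by rewrite EN ltn_eqF // ltnS ltnW.
  by rewrite /xp' /up' /= NN eqxx.
have HS : h (X c t) (U c t) + \sum_(k < N) h (xp' k) (up' k)
    <= S + \sum_(i < c.+1) \sum_(k < M) gam i k * h (X i k) (U i k).
  rewrite ES ES' -Hx0 Hu; lra.
apply: le_trans (leeD2l _ (le_trans H1 (leeD2l _ H2))) _.
rewrite Ev' Ev addeA -EFinD addeA -EFinD leeD2r // lee_fin.
Qed.

Lemma Ftel K t : ((\sum_(s < K) h (X c (t + s)%N) (U c (t + s)%N))%:E
   + Jstar (t + K) <= Jstar t)%E.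
Proof.
elim: K t => [|K IH] t; first by rewrite big_ord0 add0e addn0.
rewrite big_ord_recr /= EFinD -addeA; apply: le_trans (IH t).
by apply: leeD2l; rewrite addnS; apply: F1.
Qed.

Lemma ct_le_J t : (costtogo Q Rc X U c t <= Jstar t)%E.
Proof.
apply: ct_bound => K; apply: le_trans (Ftel K t); apply: leeDl; exact: Jstar_ge0.
Qed.

Lemma cand_feas i t : (i <= c)%N ->
  lmpc_feasible A B Fx bx Fu bu N X c (X i t) (fun k => X i (t + k)%N) (fun k => U i (t + k)%N).
Proof.
move=> ic; split.
- by rewrite addn0.
- move=> k kN; split; first by rewrite addnS Hdyn.
  + by case: (data_feas i (t + k)).
  + by case: (data_feas i (t + k)).
- exact: inCS_data.
Qed.

Lemma cand_le i t t' : (i <= c)%N -> X i t = X c t' ->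
  (Jstar t' <= costtogo Q Rc X U i t)%E.
Proof.
move=> ic E; have Hf := cand_feas t ic; rewrite E in Hf.
apply: le_trans (Jstar_le Hf) _; rewrite /lmpc_cost (ct_split i t N).
by apply: leeD2l; apply: V_le_ct.
Qed.

Lemma J_fin t : (Jstar t < +oo)%E.
Proof.
apply: (@le_lt_trans _ _ (Jstar 0%N)).
  have := Ftel t 0%N; rewrite add0n => H; apply: le_trans H.
  apply: leeDr; rewrite lee_fin; apply: sumr_ge0 => s _; exact: h_ge0.
apply: le_lt_trans Hc0.
by apply: cand_le => //; rewrite !HX0.
Qed.

Lemma sum_split (f : nat -> R) T M : (T <= M)%N ->
  \sum_(k < M) f k = \sum_(k < T) f k + \sum_(T <= k < M) f k.
Proof.
move=> TM; rewrite -(@big_mkord _ _ _ M xpredT f) -(@big_mkord _ _ _ T xpredT f).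
by rewrite (@big_cat_nat _ _ _ T 0 M xpredT f (leq0n T) TM).
Qed.

Lemma window_opt t T : (T <= N)%N ->
  fh_optimal A B Fx bx Fu bu Q Rc T (X c t) (X c (t + T)%N)
     (fun k => X c (t + k)%N) (fun k => U c (t + k)%N).
Proof.
move=> TN; split.
  split; first by rewrite addn0.
    move=> k kT; split; first by rewrite addnS Hdyn.
    + by case: (data_feas c (t + k)).
    + by case: (data_feas c (t + k)).
  by [].
move=> x' u' [Hx0 Hk HxT].
set V := Vfun Q Rc X U c (X c (t + N)%N).
have Vfin : V \is a fin_num.
  rewrite ge0_fin_numE ?V_ge0 //.
  apply: le_lt_trans (V_le_ct _ (leqnn c)) _.
  apply: le_lt_trans (ct_le_J _) _; exact: J_fin.
have Hcand : ((\sum_(k < N) h (X c (t + k)%N) (U c (t + k)%N))%:E + V <= Jstar t)%E.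
  apply: le_trans (Ftel N t); apply: leeD2l.
  apply: le_trans (V_le_ct _ (leqnn c)) (ct_le_J _).
pose xe k := if (k <= T)%N then x' k else X c (t + k)%N.
pose ue k := if (k < T)%N then u' k else U c (t + k)%N.
have Exe : forall k, (T <= k)%N -> xe k = X c (t + k)%N.
  move=> k Tk; rewrite /xe; case: ifP => // kT.
  by have -> : k = T by apply/eqP; rewrite eqn_leq kT Tk.
have Eue : forall k, (T <= k)%N -> ue k = U c (t + k)%N.
  by move=> k Tk; rewrite /ue ltnNge Tk.
have Hfe : lmpc_feasible A B Fx bx Fu bu N X c (X c t) xe ue.
  split.
  - by rewrite /xe leq0n.
  - move=> k kN; case: (ltnP k T) => kT.
      rewrite /xe /ue kT (ltnW kT); exact: Hk.
    rewrite (Exe _ kT) (Exe _ (leqW kT)) (Eue _ kT); split; first by rewrite addnS Hdyn.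
    + by case: (data_feas c (t + k)).
    + by case: (data_feas c (t + k)).
  - by rewrite (Exe _ TN); apply: inCS_data.
have H1 := Jstar_le Hfe.
rewrite /lmpc_cost (Exe _ TN) -/V in H1.
have := le_trans Hcand H1; rewrite leeD2rE // lee_fin.
rewrite (sum_split (fun k => h (X c (t + k)%N) (U c (t + k)%N)) TN).
rewrite (sum_split (fun k => h (xe k) (ue k)) TN).
have -> : \sum_(T <= k < N) h (xe k) (ue k) = \sum_(T <= k < N) h (X c (t + k)%N) (U c (t + k)%N).
  apply: eq_big_nat => k /andP [Tk _]; by rewrite Exe // Eue.
rewrite lerD2r /fh_cost.
have -> // : \sum_(k < T) h (xe k) (ue k) = \sum_(k < T) h (x' k) (u' k).
apply: eq_bigr => k _; by rewrite /xe /ue (ltn_ord k) (ltnW (ltn_ord k)).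
Qed.

Hypothesis Hlicq : forall t, (1 <= t)%N -> forall xo uo,
     fh_optimal A B Fx bx Fu bu Q Rc N.-1 (X c t) (X c (t + N.-1)%N) xo uo ->
     licq A B Fx bx Fu bu N.-1 xo uo.

Lemma main_internal t T :
  fh_optimizer A B Fx bx Fu bu Q Rc T (X c t) (X c (t + T)%N)
      (fun k => X c (t + k)%N) (fun k => U c (t + k)%N).
Proof.
apply: (opt_from_FO (proj1 HQ) Q_ge0 (proj1 HR) R_ge0).
- move=> y Hy; exact: (proj2 HR y Hy).
- split; first by rewrite addn0.
    move=> k kT; split; first by rewrite addnS Hdyn.
    + by case: (data_feas c (t + k)).
    + by case: (data_feas c (t + k)).
  by [].
- move=> dx du Had.
  apply: (decomp (x := X c) (u := U c) HN _ _ Had).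
    move=> t' T' TN dx' du' Had'.
    exact: (FO (proj1 HQ) Q_ge0 (proj1 HR) R_ge0 (window_opt t' TN) Had').
  move=> t' Ht'; exact: (Hlicq Ht' (window_opt t' (leq_pred N))).
Qed.

End LM.

Unset Implicit Arguments.

Theorem theorem1 (R : realType) (n d px pu : nat)
  (A : 'M[R]_n) (B : 'M[R]_(n, d))
  (Fx : 'M[R]_(px, n)) (bx : 'cV[R]_px) (Fu : 'M[R]_(pu, d)) (bu : 'cV[R]_pu)
  (Q : 'M[R]_n) (Rc : 'M[R]_d) (N : nat) (xS : 'cV[R]_n)
  (X : nat -> nat -> 'cV[R]_n) (U : nat -> nat -> 'cV[R]_d) (c : nat) :
  origin_interior Fx bx -> origin_interior Fu bu ->
  psd Q -> pd Rc -> (0 < N)%N ->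
  (* trajectories of every iteration start at xS and follow the dynamics *)
  (forall j, X j 0%N = xS) ->
  (forall j t, X j t.+1 = A *m X j t + B *m U j t) ->
  (* initial feasible trajectory (iteration 0) *)
  (forall t, inPoly Fx bx (X 0%N t) /\ inPoly Fu bu (U 0%N t)) ->
  (forall i, (fun t => X 0%N t i 0) @ \oo --> (0 : R)) ->
  (forall i, (fun t => U 0%N t i 0) @ \oo --> (0 : R)) ->
  (costtogo Q Rc X U 0 0 < +oo)%E ->
  (* iterations j >= 1 are the closed loop under the LMPC policy *)
  (forall j t, (0 < j)%N ->
     exists xp up, lmpc_optimal A B Fx bx Fu bu Q Rc N X U j.-1 (X j t) xp up
                   /\ U j t = up 0%N) ->
  (* convergence to a fixed point after c iterations *)
  (forall j, (c <= j)%N -> X j = X c /\ U j = U c) ->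
  (* LICQ for T = N-1, all t >= 1 *)
  (forall t, (1 <= t)%N -> forall xo uo,
     fh_optimal A B Fx bx Fu bu Q Rc N.-1 (X c t) (X c (t + N.-1)%N) xo uo ->
     licq A B Fx bx Fu bu N.-1 xo uo) ->
  forall t T, (0 < T)%N ->
    fh_optimizer A B Fx bx Fu bu Q Rc T (X c t) (X c (t + T)%N)
      (fun k => X c (t + k)%N) (fun k => U c (t + k)%N).
Proof.
Proof.
move=> _ _ HQ HR HN HX0 Hdyn Hf0 _ _ Hc0 Hlmpc Hfix Hlicq t T _.
exact: (main_internal HQ HR HN HX0 Hdyn Hf0 Hc0 Hlmpc Hfix Hlicq).
Qed.
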